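(* Let $\bar D=(D,(M_0,\alpha_0),M_f)$ be a DPNIF with $D=(P,T,F,l,V,r,w)$ a safe and well-formed DPN over a finite set $\mathcal{E}$ of event signatures, and let $\mathcal{C}\subset\mathbb{R}$ be a finite set containing every constant occurring in a guard $r(t)$ or $w(t)$, $t\in T$, and every value $\alpha_0(v)$, $v\in V$. Then the algorithm described below (Algorithm 1) terminates on $\bar D$, and its output $\langle Q,q_0,\rightarrow,F\rangle$, with $F$ the set of computed states $(M,\tilde\alpha)$ with $M=M_f$, is the GFA induced by $\bar D$ (the algorithm is sound). Algorithm 1: initialize $Q:=\{(M_0,\tilde\alpha_0)\}$ with $\tilde\alpha_0(v)=[\alpha_0(v),\alpha_0(v)]$ for all $v\in V$, worklist $W:=\{(M_0,\tilde\alpha_0)\}$, $\rightarrow:=\emptyset$. While $W\neq\emptyset$: select and remove some $(M,\tilde\alpha)$ from $W$; for every $(t,\tilde\beta)\in enabled(M,\tilde\alpha)$: let $(M',\tilde\alpha'):=fire(M,t,\tilde\beta)$; if $(M',\tilde\alpha')\notin Q$, add it to both $Q$ and $W$; let $\psi:=l(t)$, and if $w(t)\not\equiv\top$ let $\psi:=\psi\wedge guard(t,\tilde\alpha')$; add $(M,\tilde\alpha)\xrightarrow{\psi}(M',\tilde\alpha')$ to $\rightarrow$. Here: $enabled(M,\tilde\alpha)$ is the (finite) set of pairs $(t,\tilde\beta)$ with $t\in T$ and $\tilde\beta$ a region assignment defined on $\mathrm{Var}_r(t)\cup\mathrm{Var}_w(t)$ (covering all combinations of regions of $\mathcal{P}_\mathcal{C}$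 satisfying $r(t)$ and $w(t)$) such that there exist a valuation $\alpha$ with $\alpha(v)\in\tilde\alpha(v)$ for all $v\in V$ and a partial valuation $\beta$ with $\beta(v)\in\tilde\beta(v)$ for which $t$ is enabled in $(M,\alpha)$ under $\beta$; $fire(M,t,\tilde\beta)$ returns $(M',\tilde\alpha')$ with $M'(p)=M(p)-F(p,t)+F(t,p)$ for all $p\in P$, $\tilde\alpha'(v)=\tilde\beta(v)$ for $v\in\mathrm{Var}_w(t)$ and $\tilde\alpha'(v)=\tilde\alpha(v)$ otherwise; $guard(t,\tilde\alpha')=\bigwedge_{v\in\mathrm{Var}(w(t))}\phi_v$, where $\phi_v$ is $v=c$ if $\tilde\alpha'(v)=[c,c]$, $v>c_i\wedge v<c_{i+1}$ if $\tilde\alpha'(v)=(c_i,c_{i+1})$, $v<c_1$ if $\tilde\alpha'(v)=(-\infty,c_1)$, and $v>c_m$ if $\tilde\alpha'(v)=(c_m,\infty)$.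
   Context: Event signatures: a finite set $\mathcal{E}$ of pairs $\langle n,A\rangle$ (activity name $n$, finite attribute set $A$), distinct names; $\mathcal{N}_\mathcal{E}$ is the set of names, $\mathcal{A}_\mathcal{E}$ the union of attribute sets. An event of signature $\langle n,A\rangle$ is $e=\langle n,\nu\rangle$ with $\nu:A\to\mathbb{R}$ total. Conditions $\mathcal{L}_\mathcal{E}$: $\varphi::=x\mid a\odot c\mid\neg\varphi\mid\varphi\wedge\varphi$ with $x\in\mathcal{N}_\mathcal{E}$, $a\in\mathcal{A}_\mathcal{E}$, $\odot\in\{<,=,>\}$, $c\in\mathbb{R}$; $e\models x$ iff $x=n$, $e\models a\odot c$ iff $\nu(a)$ is defined and $\nu(a)\odot c$, Boolean connectives as usual. Guards $\mathcal{G}_\mathcal{E}$ are conditions not mentioning names; an (partial) assignment $\alpha$ satisfies $a\odot c$ iff $\alpha(a)\odot c$; $\mathrm{Var}(\gamma)$ is the set of attributes in guard $\gamma$. A DPN is $D=(P,T,F,l,V,r,w)$: disjoint finite sets $P$ (places) and $T$ (transitions), flow $F:(P\times T)\cup(T\times P)\to\mathbb{N}$, labeling $l:T\to\mathcal{N}_\mathcal{E}\cup\{\tau\}$ ($\tau$ = silent), variables $V\subseteq\mathcal{A}_\mathcal{E}$, read and write guard functions $r,w:T\to\mathcal{G}_\mathcal{E}$; $\mathrm{Var}_r(t)=\mathrm{Var}(r(t))$, $\mathrm{Var}_w(t)=\mathrm{Var}(w(t))$, ${}^\bullet t=\{p\mid F(p,t)>0\}$. A state is $(M,\alpha)$ with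 $M:P\to\mathbb{N}$ and $\alpha:V\to\mathbb{R}$ total. Transition $t$ is enabled in $(M,\alpha)$ under a partial valuation $\beta:V\rightharpoonup\mathbb{R}$ iff $\beta$ is defined on $\mathrm{Var}_r(t)\cup\mathrm{Var}_w(t)$, $\beta(v)=\alpha(v)$ for $v\in\mathrm{Var}_r(t)$, $\beta\models r(t)$, $\beta\models w(t)$, and $M(p)\ge F(p,t)$ for all $p\in{}^\bullet t$. Firing yields $(M',\alpha')$ with $M'(p)=M(p)-F(p,t)+F(t,p)$, $\alpha'(v)=\beta(v)$ for $v\in\mathrm{Var}_w(t)$, $\alpha'(v)=\alpha(v)$ otherwise. Safe: every reachable marking assigns at most 1 token to each place. Well-formed: every visible $t$ with $l(t)=n$, $\langle n,A\rangle\in\mathcal{E}$, has $\mathrm{Var}_w(t)=A$, and every silent $t$ has $w(t)\equiv\top$. A DPNIF is $(D,(M_0,\alpha_0),M_f)$ with an initial state and a final marking. Interval abstraction: for $\mathcal{C}=\{c_1<\dots<c_m\}$, $\mathcal{P}_\mathcal{C}$ is the partition of $\mathbb{R}$ into $(-\infty,c_1)$, $(c_m,\infty)$, $[c_i,c_i]$ ($1\le i\le m$) and $(c_i,c_{i+1})$ ($1\le i<m$). A region assignment maps variables to elements of $\mathcal{P}_\mathcal{C}$; $\tilde\alpha$ denotes the region assignment sending $v$ to the region containing $\alpha(v)$. A guarded finite-state automaton (GFA) over $\mathcal{E}$ is $\langle Q,q_0,\rightarrow,F\rangle$ with finite state set $Q$, initial state $q_0$, transition relation $\rightarrow\subseteq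 Q\times\mathcal{L}_\mathcal{E}\times Q$ (here extended so that labels may use $\tau$ in place of a name), and final states $F\subseteq Q$. GFA induced by $\bar D$: let $S$ be the set of states reachable from $(M_0,\alpha_0)$; $(M,\alpha)\sim(M',\alpha')$ iff $M=M'$ and for every $v\in V$, $\alpha(v),\alpha'(v)$ lie in the same region of $\mathcal{P}_\mathcal{C}$; classes are represented as $(M,\tilde\alpha)$. Then $Q=S/{\sim}$; $q_0=(M_0,\tilde\alpha_0)$; $(M,\tilde\alpha)\xrightarrow{a\wedge\psi}(M',\tilde\alpha')$ iff there are $t\in T$ and $\beta$ with $(M,\alpha)$ firing $t$ under $\beta$ into $(M',\alpha')$ for some $\alpha,\alpha'$ with $\alpha(v)\in\tilde\alpha(v)$, $\alpha'(v)\in\tilde\alpha'(v)$ for all $v$, $a=l(t)$, and $\psi=\bigwedge_{v\in\mathrm{Var}(w(t))}\phi_v$ with $\phi_v$ as defined in the claim; $F=\{(M,\tilde\alpha)\mid M=M_f\}$. *)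

(* Defs.v *)
From Stdlib Require Import Reals List.
From mathcomp Require Import all_boot.

Set Implicit Arguments.
Unset Strict Implicit.
Unset Printing Implicit Defensive.

Inductive cmp := CLt | CEq | CGt.

Definition cmpR (o : cmp) (x c : R) : Prop :=
  match o with CLt => Rlt x c | CEq => x = c | CGt => Rgt x c end.

(** Elements of the partition P_C :  (-oo,c) | [c,c] | (a,b) | (c,+oo);
    RAll = the single region R, used only when C is empty. *)
Inductive region :=
  | RBelow (c : R) | RPoint (c : R) | RBetween (a b : R) | RAbove (c : R) | RAll.

Definition in_region (x : R) (r : region) : Prop :=
  match r with
  | RBelow c => Rlt x c
  | RPoint c => x = c
  | RBetween a b => Rlt a x /\ Rlt x b
  | RAbove c => Rgt x c
  | RAll => True
  end.

(** [is_region C r] : r is an element of the partition P_C (C a finite set, as a list). *)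
Definition is_region (C : seq R) (r : region) : Prop :=
  match r with
  | RBelow c => List.In c C /\ (forall d, List.In d C -> Rle c d)
  | RAbove c => List.In c C /\ (forall d, List.In d C -> Rle d c)
  | RPoint c => List.In c C
  | RBetween a b => List.In a C /\ List.In b C /\ Rlt a b /\
                    (forall d, List.In d C -> ~ (Rlt a d /\ Rlt d b))
  | RAll => C = nil
  end.

Section DPNs.
Variables (Name : Type) (Att P T : finType).

(** * Guards (conditions not mentioning names; ⊤ is included as a primitive) *)
Inductive guard :=
  | GTrue
  | GAtom (a : Att) (o : cmp) (c : R)
  | GNot (g : guard)
  | GAnd (g1 g2 : guard).

Fixpoint gvars (g : guard) : {set Att} :=
  match g with
  | GTrue => set0
  | GAtom a _ _ => [set a]
  | GNot g => gvars g
  | GAnd g1 g2 => gvars g1 :|: gvars g2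
  end.

Fixpoint gconsts (g : guard) : seq R :=
  match g with
  | GTrue => [::]
  | GAtom _ _ c => [:: c]
  | GNot g => gconsts g
  | GAnd g1 g2 => gconsts g1 ++ gconsts g2
  end.

Definition pval := {ffun Att -> option R}.

Fixpoint gsat (b : Att -> option R) (g : guard) : Prop :=
  match g with
  | GTrue => True
  | GAtom a o c => exists x, b a = Some x /\ cmpR o x c
  | GNot g => ~ gsat b g
  | GAnd g1 g2 => gsat b g1 /\ gsat b g2
  end.

(** * Conditions (GFA labels), names extended with tau = None *)
Inductive cond :=
  | CName (x : option Name)
  | CAtom (a : Att) (o : cmp) (c : R)
  | CNot (f : cond)
  | CAnd (f1 f2 : cond).

Fixpoint csat (n : option Name) (nu : Att -> option R) (f : cond) : Prop :=
  match f with
  | CName x => x = n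
  | CAtom a o c => exists y, nu a = Some y /\ cmpR o y c
  | CNot f => ~ csat n nu f
  | CAnd f1 f2 => csat n nu f1 /\ csat n nu f2
  end.

Definition cond_equiv (f1 f2 : cond) : Prop :=
  forall n nu, csat n nu f1 <-> csat n nu f2.

(** ⊤ as an abbreviation inside the condition grammar *)
Definition ctrue : cond := CNot (CAnd (CName None) (CNot (CName None))).

Record DPN := MkDPN {
  Fin : P -> T -> nat;
  Fout : T -> P -> nat;
  lab : T -> option Name;       (* None = tau *)
  V : {set Att};
  rg : T -> guard;
  wg : T -> guard }.

Definition marking := {ffun P -> nat}.

Definition rvars (D : DPN) t := gvars (rg D t).
Definition wvars (D : DPN) t := gvars (wg D t).

Definition enabled (D : DPN) (M : marking) (a : pval) (t : T) (b : pval) : Prop :=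
  (forall v, v \in rvars D t :|: wvars D t -> b v <> None) /\
  (forall v, b v <> None -> v \in V D) /\
  (forall v, v \in rvars D t -> b v = a v) /\
  gsat b (rg D t) /\ gsat b (wg D t) /\
  (forall p, Fin D p t <= M p).

Definition fire_m (D : DPN) (M : marking) (t : T) : marking :=
  [ffun p => M p - Fin D p t + Fout D t p].

Definition fire_v (D : DPN) (a : pval) (t : T) (b : pval) : pval :=
  [ffun v => if v \in wvars D t then b v else a v].

Inductive reach (D : DPN) (M0 : marking) (a0 : pval) : marking -> pval -> Prop :=
  | reach_init : reach D M0 a0 M0 a0
  | reach_step M a t b :
      reach D M0 a0 M a -> enabled D M a t b ->
      reach D M0 a0 (fire_m D M t) (fire_v D a t b).

Definition safe (D : DPN) (M0 : marking) (a0 : pval) : Prop :=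
  forall M a, reach D M0 a0 M a -> forall p, M p <= 1.

Definition attrsE (E : seq (Name * {set Att})) : {set Att} := \bigcup_(x <- E) x.2.

Definition DPN_over (E : seq (Name * {set Att})) (D : DPN) : Prop :=
  V D \subset attrsE E /\
  (forall t, rvars D t \subset attrsE E /\ wvars D t \subset attrsE E) /\
  (forall t n, lab D t = Some n -> List.In n (map fst E)).

Definition well_formed (E : seq (Name * {set Att})) (D : DPN) : Prop :=
  (forall t n A, lab D t = Some n -> List.In (n, A) E -> wvars D t = A) /\
  (forall t, lab D t = None -> forall b : pval, gsat b (wg D t)).

Definition rval := {ffun Att -> option region}.
Definition astate := (marking * rval)%type.

Definition in_aregion (b : Att -> option R) (rb : Att -> option region) : Prop :=
  forall v, match b v, rb v with
            | Some x, Some r => in_region x r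
            | None, None => True
            | _, _ => False
            end.

Definition abs_val (C : seq R) (a : Att -> option R) (ra : Att -> option region) : Prop :=
  in_aregion a ra /\ (forall v r, ra v = Some r -> is_region C r).

Definition phi (v : Att) (r : option region) : cond :=
  match r with
  | Some (RPoint c) => CAtom v CEq c
  | Some (RBetween a b) => CAnd (CAtom v CGt a) (CAtom v CLt b)
  | Some (RBelow c) => CAtom v CLt c
  | Some (RAbove c) => CAtom v CGt c
  | _ => ctrue
  end.

Definition guard_of (D : DPN) (t : T) (ra : rval) : cond :=
  foldr (fun v acc => CAnd (phi v (ra v)) acc) ctrue (enum (wvars D t)).

Definition ind_Q (D : DPN) (C : seq R) (M0 : marking) (a0 : pval) (s : astate) : Prop :=
  exists M a, reach D M0 a0 M a /\ s.1 = M /\ abs_val C a s.2.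

Definition ind_q0 (C : seq R) (M0 : marking) (a0 : pval) (s : astate) : Prop :=
  s.1 = M0 /\ abs_val C a0 s.2.

Definition ind_trans (D : DPN) (C : seq R) (M0 : marking) (a0 : pval)
    (s : astate) (psi : cond) (s' : astate) : Prop :=
  ind_Q D C M0 a0 s /\ ind_Q D C M0 a0 s' /\
  exists t (a b : pval),
    abs_val C a s.2 /\ enabled D s.1 a t b /\
    s'.1 = fire_m D s.1 t /\ abs_val C (fire_v D a t b) s'.2 /\
    psi = CAnd (CName (lab D t)) (guard_of D t s'.2).

(** * Algorithm 1, as a nondeterministic small-step transition system *)
Record config := Config {
  cQ : seq astate;
  cW : seq astate;
  cTr : seq (astate * cond * astate) }.

Definition enabled_abs (D : DPN) (C : seq R) (s : astate) (e : T * rval) : Prop :=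
  (forall v, v \in rvars D e.1 :|: wvars D e.1 <-> e.2 v <> None) /\
  (forall v r, e.2 v = Some r -> is_region C r) /\
  exists a b : pval, in_aregion a s.2 /\ in_aregion b e.2 /\ enabled D s.1 a e.1 b.

Definition afire (D : DPN) (s : astate) (t : T) (rb : rval) : astate :=
  (fire_m D s.1 t, [ffun v => if v \in wvars D t then rb v else s.2 v]).

Definition alg_label (D : DPN) (t : T) (s' : astate) (psi : cond) : Prop :=
  (wg D t = GTrue /\ psi = CName (lab D t)) \/
  (wg D t <> GTrue /\ psi = CAnd (CName (lab D t)) (guard_of D t s'.2)).

Definition process_one (D : DPN) (s : astate) (e : T * rval) (c c' : config) : Prop :=
  let s' := afire D s e.1 e.2 in
  exists psi, alg_label D e.1 s' psi /\
  ((List.In s' (cQ c) /\ cQ c' = cQ c /\ cW c' = cW c) \/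
   (~ List.In s' (cQ c) /\ cQ c' = s' :: cQ c /\ cW c' = s' :: cW c)) /\
  cTr c' = (s, psi, s') :: cTr c.

Inductive process_all (D : DPN) (s : astate) : seq (T * rval) -> config -> config -> Prop :=
  | pa_nil c : process_all D s [::] c c
  | pa_cons e es c c1 c2 :
      process_one D s e c c1 -> process_all D s es c1 c2 -> process_all D s (e :: es) c c2.

Definition alg_step (D : DPN) (C : seq R) (c c' : config) : Prop :=
  exists s W1 W2 (es : seq (T * rval)),
    cW c = W1 ++ s :: W2 /\
    List.NoDup es /\ (forall e, List.In e es <-> enabled_abs D C s e) /\
    process_all D s es (Config (cQ c) (W1 ++ W2) (cTr c)) c'.

Definition init_astate (M0 : marking) (a0 : pval) : astate :=
  (M0, [ffun v => omap RPoint (a0 v)]).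

Definition alg_init (s0 : astate) : config := Config [:: s0] [:: s0] [::].

Inductive alg_reach (D : DPN) (C : seq R) (c0 : config) : config -> Prop :=
  | ar_init : alg_reach D C c0 c0
  | ar_step c c' : alg_reach D C c0 c -> alg_step D C c c' -> alg_reach D C c0 c'.

(** termination: no infinite run, and no run gets stuck while W is nonempty *)
Definition alg_terminates (D : DPN) (C : seq R) (c0 : config) : Prop :=
  Acc (fun c' c => alg_step D C c c') c0 /\
  (forall c, alg_reach D C c0 c -> cW c <> [::] -> exists c', alg_step D C c c').

(** the output <Q, q0, ->, F> of a final configuration is the induced GFA
    (transition labels compared up to logical equivalence) *)
Definition output_is_induced (D : DPN) (C : seq R) (M0 Mf : marking) (a0 : pval)
    (c : config) : Prop :=
  (forall s, List.In s (cQ c) <-> ind_Q D C M0 a0 s) /\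
  ind_q0 C M0 a0 (init_astate M0 a0) /\
  (forall s, (List.In s (cQ c) /\ s.1 = Mf) <-> (ind_Q D C M0 a0 s /\ s.1 = Mf)) /\
  (forall s psi s', List.In (s, psi, s') (cTr c) ->
     exists psi', ind_trans D C M0 a0 s psi' s' /\ cond_equiv psi psi') /\
  (forall s psi s', ind_trans D C M0 a0 s psi s' ->
     exists psi', List.In (s, psi', s') (cTr c) /\ cond_equiv psi psi').

End DPNs.

(* Main.v *)
Require Import Defs.
From Stdlib Require Import Reals List Lra Classical ClassicalEpsilon.
From mathcomp Require Import all_boot.
From Stdlib Require Import Lia.
From mathcomp Require Import zify.
Set Implicit Arguments.
Unset Strict Implicit.

Lemma ex_max (Q : R -> Prop) (l : seq R) :
  (exists d, List.In d l /\ Q d) ->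
  exists m, List.In m l /\ Q m /\ forall d, List.In d l -> Q d -> Rle d m.
Proof.
elim: l => [|x l IH] [d [Hd Qd]]; first by case: Hd.
case: (classic (exists d, List.In d l /\ Q d)) => [H|H].
- case: (IH H) => m [Hm [Qm Hmax]].
  case: (classic (Q x)) => Qx.
  + case: (Rle_lt_dec x m) => Hxm.
    * exists m; split; [right|split] => //.
      move=> d' [<-|Hd'] //; exact: Hmax.
    * exists x; split; [left|split] => //.
      move=> d' [<-|Hd'] Qd'; [lra|]. have := Hmax _ Hd' Qd'; lra.
  + exists m; split; [right|split] => //.
    move=> d' [<-|Hd'] // Qd'; exact: Hmax.
- case: Hd => [Ex|Hd]; last by case: H; exists d.
  subst d. exists x; split; [left|split] => //.
  move=> d' [<-|Hd'] Qd'; [lra|]. by case: H; exists d'.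
Qed.

Lemma ex_min (Q : R -> Prop) (l : seq R) :
  (exists d, List.In d l /\ Q d) ->
  exists m, List.In m l /\ Q m /\ forall d, List.In d l -> Q d -> Rle m d.
Proof.
move=> H.
have H' : exists d, List.In d (List.map Ropp l) /\ (fun y => Q (Ropp y)) d.
  case: H => d [Hd Qd]; exists (Ropp d); split; first exact: in_map.
  by rewrite Ropp_involutive.
case: (ex_max H') => m [Hm [Qm Hmax]].
case/in_map_iff: Hm => m' [Em Hm']. subst m.
exists m'; split => //; split; first by rewrite Ropp_involutive in Qm.
move=> d Hd Qd. have := Hmax (Ropp d) (in_map _ _ _ Hd).
rewrite Ropp_involutive => /(_ Qd). lra.
Qed.

Lemma region_ex (C : seq R) (x : R) : exists r, is_region C r /\ in_region x r.
Proof.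
case HC: C => [|c0 C']; first by exists RAll.
rewrite -HC.
case: (classic (List.In x C)) => Hx; first by exists (RPoint x).
case: (classic (exists d, List.In d C /\ Rlt d x)) => Hlo;
case: (classic (exists d, List.In d C /\ Rlt x d)) => Hhi.
- case: (ex_max Hlo) => a [Ha [Qa Ma]]; case: (ex_min Hhi) => b [Hb [Qb Mb]].
  exists (RBetween a b); split; last by split.
  split => //; split => //; split; first lra.
  move=> d Hd [H1 H2].
  case: (Rtotal_order d x) => [H|[H|H]].
  + have := Ma d Hd H; lra.
  + by subst d.
  + have := Mb d Hd H; lra.
- case: (ex_max Hlo) => a [Ha [Qa Ma]].
  exists (RAbove a); split => //=; split => // d Hd.
  case: (Rtotal_order d x) => [H|[H|H]].
  + exact: Ma.
  + by subst d.
  + by case: Hhi; exists d.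
- case: (ex_min Hhi) => b [Hb [Qb Mb]].
  exists (RBelow b); split => //=; split => // d Hd.
  case: (Rtotal_order d x) => [H|[H|H]].
  + by case: Hlo; exists d.
  + by subst d.
  + exact: Mb.
- exfalso. have Hc : List.In c0 C by rewrite HC; left.
  case: (Rtotal_order c0 x) => [H|[H|H]].
  + by case: Hlo; exists c0.
  + by subst c0.
  + by case: Hhi; exists c0.
Qed.

Lemma nobetween a b c : ~ (Rlt a c /\ Rlt c b) -> Rle c a \/ Rle b c.
Proof. move=> H. case: (Rle_lt_dec c a) => h; [by left|]. case: (Rle_lt_dec b c) => h'; [by right|]. by case: H. Qed.

Ltac go n :=
  match n with
  | O => lra
  | S ?m => first [ lra | match goal with Hf : forall d, In d _ -> _, Hc : In ?c _ |- _ =>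
        let h := fresh "h" in have h := Hf c Hc; clear Hf; (destruct h as [h|h] || idtac); go m end ]
  end.

Lemma region_uniq (C : seq R) (x : R) r1 r2 :
  is_region C r1 -> is_region C r2 -> in_region x r1 -> in_region x r2 -> r1 = r2.
Proof.
case: r1 => [c|c|a b|c|]; case: r2 => [c'|c'|a' b'|c'|] /=;
 move=> H1 H2 H3 H4; repeat (match goal with H: _ /\ _ |- _ => destruct H end); subst;
 try done; try (by case: H1); try (by case: H2);
 repeat match goal with H : In _ nil |- _ => by case: H end.
all: repeat match goal with Hf : forall d, In d _ -> ~ _ |- _ => have {}Hf := fun d h => nobetween (Hf d h) end.
all: first [ by exfalso; go 3 | by f_equal; go 3 ].
Qed.

Lemma region_cmp C r x y c o : is_region C r -> in_region x r -> in_region y r -> In c C ->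
  (cmpR o x c <-> cmpR o y c).
Proof.
case: r => [c0|c0|a b|c0|] /=; move=> H1 H2 H3 Hc;
 repeat (match goal with H: _ /\ _ |- _ => destruct H end); subst; try done;
 try (by rewrite H1 in Hc).
all: repeat match goal with Hf : forall d, In d _ -> ~ _ |- _ => have {}Hf := fun d h => nobetween (Hf d h) end.
all: case: o => /=; split => ?; go 2.
Qed.

Lemma In_cat (A : Type) (x : A) (s1 s2 : seq A) : In x (s1 ++ s2)%SEQ <-> In x s1 \/ In x s2.
Proof. elim: s1 => [|y s1 IH] /=; first tauto. rewrite IH; tauto. Qed.

Definition rel (C : seq R) (ox oy : option R) :=
  ox = oy \/ exists x y r, ox = Some x /\ oy = Some y /\ is_region C r /\ in_region x r /\ in_region y r.

Lemma gsat_transfer (Att : finType) C (g : guard Att) (b b' : Att -> option R) :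
  (forall c, In c (gconsts g) -> In c C) ->
  (forall v, v \in gvars g -> rel C (b v) (b' v)) -> (gsat b g <-> gsat b' g).
Proof.
elim: g => [|a o c|g IH|g1 IH1 g2 IH2] /= HC Hv.
- done.
- have [E|[x [y [r [Ex [Ey [Hr [Hx Hy]]]]]]]] := Hv a (set11 a).
  + by rewrite E.
  + rewrite Ex Ey; split=> [[z [[<-] Hz]]|[z [[<-] Hz]]].
    * have Hc : In c C by apply: HC; left.
      exists y; split=> //; by apply/(@region_cmp C r x y c o Hr Hx Hy Hc).
    * have Hc : In c C by apply: HC; left.
      exists x; split=> //; by apply/(@region_cmp C r x y c o Hr Hx Hy Hc).
- have := IH HC Hv; tauto.
- have h1 : gsat b g1 <-> gsat b' g1.
    apply: IH1 => [c h|v h]; [apply: HC; apply/In_cat; by left|apply: Hv; by rewrite in_setU h].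
  have h2 : gsat b g2 <-> gsat b' g2.
    apply: IH2 => [c h|v h]; [apply: HC; apply/In_cat; by right|apply: Hv; by rewrite in_setU h orbT].
  tauto.
Qed.

Section Main.
Variables (Name : Type) (Att P T : finType) (D : DPN Name Att P T) (C : seq R)
  (M0 : {ffun P -> nat}) (a0 : {ffun Att -> option R}).
Hypothesis HCg : forall t c, List.In c (gconsts (rg D t)) \/ List.In c (gconsts (wg D t)) -> List.In c C.

Definition validS (s : astate Att P) :=
  ind_Q D C M0 a0 s /\ (forall v r, s.2 v = Some r -> is_region C r).

Lemma abs_uniq (a : Att -> option R) (r1 r2 : rval Att) :
  abs_val C a r1 -> abs_val C a r2 -> r1 = r2.
Proof.
move=> [h1 g1] [h2 g2]; apply/ffunP => v.
move: (h1 v) (h2 v) (g1 v) (g2 v).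
case: (a v) => [x|]; case: (r1 v) => [r|]; case: (r2 v) => [r'|] //= i1 i2 j1 j2.
by rewrite (region_uniq (j1 r erefl) (j2 r' erefl) i1 i2).
Qed.

Lemma abs_ex (a : Att -> option R) : exists ra : rval Att, abs_val C a ra.
Proof.
have H : forall v, exists o : option region,
    match a v, o with Some x, Some r => in_region x r /\ is_region C r
                 | None, None => True | _, _ => False end.
  move=> v; case: (a v) => [x|]; last by exists None.
  case: (region_ex C x) => r [h1 h2]; by exists (Some r).
case: (fin_all_exists H) => f Hf.
exists [ffun v => f v]; split => v; rewrite ffunE; move: (Hf v);
  case: (a v) => [x|]; case: (f v) => [r|] //=.
- by case.
- move=> [h1 h2] r0 [<-]; done.
Qed.

Lemma gsat_wg t (b b' : Att -> option R) :
  (forall v, v \in gvars (wg D t) -> rel C (b v) (b' v)) -> (gsat b (wg D t) <-> gsat b' (wg D t)).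
Proof. move=> H; apply: gsat_transfer H => c h; exact: (HCg (or_intror h)). Qed.

Lemma gsat_rg t (b b' : Att -> option R) :
  (forall v, v \in gvars (rg D t) -> rel C (b v) (b' v)) -> (gsat b (rg D t) <-> gsat b' (rg D t)).
Proof. move=> H; apply: gsat_transfer H => c h; exact: (HCg (or_introl h)). Qed.

Lemma soundness_new (s : astate Att P) e :
  validS s -> enabled_abs D C s e -> validS (afire D s e.1 e.2).
Proof.
case: e => t rb /=.
move=> [[M [a1 [Hr [HM [ia1 ga1]]]]] gs] [Hdom [grb [a [b [ia [ib [En1 [En2 [En3 [En4 [En5 En6]]]]]]]]]]] /=.
simpl in *.
set b1 : pval Att := [ffun v => if v \in rvars D t then a1 v else b v].
have Hrel : forall v, rel C (b v) (b1 v).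
  move=> v; rewrite /b1 ffunE; case Hv: (v \in rvars D t); last by left.
  rewrite (En3 v Hv).
  move: (ia v) (ia1 v) (gs v); case: (a v) => [x|]; case: (a1 v) => [y|]; case: (s.2 v) => [r|] //=.
  + move=> h1 h2 /(_ r erefl) h3; right; by exists x, y, r.
  + by left.
have En : enabled D M a1 t b1.
  split; [|split; [|split; [|split; [|split]]]].
  - move=> v Hv; rewrite /b1 ffunE; case Hvr: (v \in rvars D t); last exact: En1.
    have := En1 v Hv; rewrite (En3 v Hvr).
    move: (ia v) (ia1 v); case: (a v) => [x|]; case: (a1 v) => [y|]; case: (s.2 v) => [r|] //=.
  - move=> v; rewrite /b1 ffunE; case Hvr: (v \in rvars D t); last exact: En2.
    move=> _; apply: En2; apply: En1; by rewrite in_setU Hvr.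
  - by move=> v Hv; rewrite /b1 ffunE Hv.
  - apply/(gsat_rg (b:=b)) => // v _; exact: Hrel.
  - apply/(gsat_wg (b:=b)) => // v _; exact: Hrel.
  - by rewrite -HM.
split.
- exists (fire_m D M t), (fire_v D a1 t b1); split; first exact: reach_step Hr En.
  split; first by rewrite /= HM.
  split.
  + move=> v; rewrite /fire_v !ffunE /=.
    case Hw: (v \in wvars D t); last exact: ia1.
    case Hvr: (v \in rvars D t); last exact: ib.
    have Hd : rb v <> None by apply/Hdom; rewrite in_setU Hw orbT.
    move: (ia v) (ia1 v) (ib v) (gs v) (grb v) Hd; rewrite (En3 v Hvr).
    case: (a v) => [x|]; case: (a1 v) => [y|]; case: (s.2 v) => [r|]; case: (rb v) => [r'|] //=.
    move=> h1 h2 h3 /(_ r erefl) g1 /(_ r' erefl) g2 _.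
    by rewrite -(region_uniq g1 g2 h1 h3).
  + move=> v r; rewrite ffunE /=; case: (v \in wvars D t); [exact: grb|exact: gs].
- move=> v r /=; rewrite ffunE; case: (v \in wvars D t); [exact: grb|exact: gs].
Qed.

Lemma complete_step (s : astate Att P) (a : pval Att) (t : T) (b : pval Att) :
  abs_val C a s.2 -> enabled D s.1 a t b ->
  exists rb, enabled_abs D C s (t, rb) /\ abs_val C (fire_v D a t b) (afire D s t rb).2.
Proof.
move=> [ia ga] [En1 [En2 [En3 [En4 [En5 En6]]]]].
case: (abs_ex b) => rab [iab gab].
set S := rvars D t :|: wvars D t.
exists [ffun v => if v \in S then rab v else None].
set b' : pval Att := [ffun v => if v \in S then b v else None].
have Hrel : forall v, v \in S -> rel C (b v) (b' v).
  by move=> v Hv; left; rewrite /b' ffunE Hv.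
split; [split; [|split]|] => /=.
- move=> v; rewrite ffunE; case Hv: (v \in S); last by split.
  split=> [h|h //]; have := En1 v Hv; move: (iab v) h.
  by case: (b v); case: (rab v).
- by move=> v r; rewrite ffunE; case: (v \in S) => // /gab.
- exists a, b'; split => //; split.
  + move=> v; rewrite !ffunE; case: (v \in S) => //; exact: iab.
  split; [|split; [|split; [|split; [|split]]]].
  * by move=> v Hv; rewrite /b' ffunE Hv; exact: En1.
  * move=> v; rewrite /b' ffunE; case: (v \in S) => //; exact: En2.
  * move=> v Hv; rewrite /b' ffunE.
    have -> : v \in S by rewrite in_setU Hv.
    exact: En3.
  * apply/(gsat_rg (b:=b)) => // v Hv; apply: Hrel; by rewrite in_setU -/(rvars D t) Hv.
  * apply/(gsat_wg (b:=b)) => // v Hv; apply: Hrel; by rewrite in_setU -/(wvars D t) Hv orbT.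
  * done.
- split.
  + move=> v; rewrite !ffunE; case Hw: (v \in wvars D t); last exact: ia.
    have -> : v \in S by rewrite in_setU Hw orbT.
    exact: iab.
  + move=> v r; rewrite !ffunE; case: (v \in wvars D t); last exact: ga.
    case: (v \in S) => //; exact: gab.
Qed.


Definition proc (c : config Name Att P) (s : astate Att P) (e : T * rval Att) :=
  In (afire D s e.1 e.2) (cQ c) /\
  exists psi, alg_label D e.1 (afire D s e.1 e.2) psi /\ In (s, psi, afire D s e.1 e.2) (cTr c).

Definition trOK (c : config Name Att P) :=
  forall s psi s', In (s, psi, s') (cTr c) -> In s (cQ c) /\ In s' (cQ c) /\
    exists e, enabled_abs D C s e /\ s' = afire D s e.1 e.2 /\ alg_label D e.1 s' psi.

Definition Loc (c : config Name Att P) :=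
  (forall x, In x (cQ c) -> validS x) /\ NoDup (cQ c) /\ trOK c.

Definition Good (c c' : config Name Att P) :=
  incl (cQ c) (cQ c') /\ incl (cW c) (cW c') /\ incl (cTr c) (cTr c') /\
  (forall x, In x (cQ c') -> In x (cQ c) \/ In x (cW c')) /\
  (forall x, In x (cW c') -> In x (cW c) \/ In x (cQ c')) /\
  exists k, size (cQ c') = size (cQ c) + k /\ size (cW c') = size (cW c) + k.

Lemma Good_refl c : Good c c.
Proof.
split; [|split; [|split; [|split; [|split]]]]; try exact: incl_refl; try tauto.
by exists 0; rewrite !addn0.
Qed.

Lemma Good_trans c1 c2 c3 : Good c1 c2 -> Good c2 c3 -> Good c1 c3.
Proof.
move=> [q1 [w1 [t1 [a1 [b1 [k1 [k1q k1w]]]]]]] [q2 [w2 [t2 [a2 [b2 [k2 [k2q k2w]]]]]]].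
split; [exact: incl_tran q1 q2|split; [exact: incl_tran w1 w2|split; [exact: incl_tran t1 t2|]]].
split; [|split].
- move=> x /a2 [/a1 [h|h]|h]; [by left|right; exact: w2|by right].
- move=> x /b2 [/b1 [h|h]|h]; [by left|right; exact: q2|by right].
- exists (k1 + k2); by rewrite k2q k1q k2w k1w !addnA.
Qed.

Lemma proc_mono c c' s e : proc c s e -> incl (cQ c) (cQ c') -> incl (cTr c) (cTr c') -> proc c' s e.
Proof.
move=> [h1 [psi [h2 h3]]] q t; split; first exact: q.
exists psi; split => //; exact: t.
Qed.

Lemma po_props s e (c c1 : config Name Att P) :
  process_one D s e c c1 -> validS s -> In s (cQ c) -> enabled_abs D C s e -> Loc c ->
  Loc c1 /\ Good c c1 /\ proc c1 s e.
Proof.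
move=> [psi [Hl [Hc HT]]] Vs Is Ee [LV [LN LT]].
have Vs' := soundness_new Vs Ee.
set s' := afire D s e.1 e.2 in Hl Hc HT Vs' *.
have Tr1 : incl (cTr c) (cTr c1) by rewrite HT => x h; right.
case: Hc => [[Hin [EQ EW]]|[Hnin [EQ EW]]].
- split; [split; [|split]|split].
  + by rewrite EQ.
  + by rewrite EQ.
  + move=> x y z; rewrite HT EQ => -[[<- <- <-]|h]; last exact: LT.
    split => //; split => //; by exists e.
  + rewrite /Good EQ EW; split; [exact: incl_refl|split; [exact: incl_refl|split => //]].
    split; [tauto|split; [tauto|]]. by exists 0; rewrite !addn0.
  + split; first by rewrite EQ.
    exists psi; split => //; rewrite HT; by left.
- have Q1 : incl (cQ c) (cQ c1) by rewrite EQ => x h; right.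
  split; [split; [|split]|split].
  + rewrite EQ => x [<-|h] //; exact: LV.
  + by rewrite EQ; constructor.
  + move=> x y z; rewrite HT => -[[<- <- <-]|h].
    * split; [exact: Q1|split; [by rewrite EQ; left|]]; by exists e.
    * have [h1 [h2 h3]] := LT _ _ _ h; split; [exact: Q1|split; [exact: Q1|done]].
  + rewrite /Good; split => //; split; [by rewrite EW => x h; right|split => //].
    split; [rewrite EQ EW => x [<-|h]; [right; left|left]|split] => //.
    * rewrite EW EQ => x [<-|h]; [right; left|left] => //.
    * by exists 1; rewrite EQ EW /= !addn1.
  + split; first by rewrite EQ; left.
    exists psi; split => //; rewrite HT; by left.
Qed.

Lemma pa_props s es (c c' : config Name Att P) :
  process_all D s es c c' -> validS s -> In s (cQ c) ->
  (forall e, In e es -> enabled_abs D C s e) -> Loc c ->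
  Loc c' /\ Good c c' /\ (forall e, In e es -> proc c' s e).
Proof.
elim=> {es c c'} [c|e es c c1 c2 H1 H2 IH] Vs Is Ee Lc.
- split => //; split; first exact: Good_refl. done.
- have [L1 [G1 P1]] := po_props H1 Vs Is (Ee e (or_introl erefl)) Lc.
  have [L2 [G2 P2]] := IH Vs (proj1 G1 _ Is) (fun e' h => Ee e' (or_intror h)) L1.
  split => //; split; first exact: Good_trans G1 G2.
  move=> e' [<-|h]; [exact: proc_mono P1 (proj1 G2) (proj1 (proj2 (proj2 G2)))|exact: P2].
Qed.

Definition s0 := init_astate M0 a0.

Definition Inv (c : config Name Att P) :=
  In s0 (cQ c) /\ Loc c /\ (forall x, In x (cW c) -> In x (cQ c)) /\
  (forall x, In x (cQ c) -> In x (cW c) \/ forall e, enabled_abs D C x e -> proc c x e).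

Lemma step_inv c c' : Inv c -> alg_step D C c c' ->
  Inv c' /\ exists k, size (cQ c') = size (cQ c) + k /\ (size (cW c')).+1 = size (cW c) + k.
Proof.
move=> [I0 [IL [IW IP]]] [s [W1 [W2 [es [EW [ND [Hes HPA]]]]]]].
have Is : In s (cQ c) by apply: IW; rewrite EW; apply/In_cat; right; left.
have Vs : validS s by apply: (proj1 IL).
set c0 := Config (cQ c) (W1 ++ W2) (cTr c) in HPA.
have L0 : Loc c0 by [].
have [L' [[q [w [t [a [b [k [kq kw]]]]]]] P']] :=
  pa_props HPA Vs Is (fun e h => proj1 (Hes e) h) L0.
split.
- split; first exact: q. split => //. split.
  + move=> x /b [h|h] //; apply: q; apply: IW; rewrite EW.
    case/In_cat: h => h; apply/In_cat; [by left|by right; right].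
  + move=> x /a [h|h]; last by left.
    case: (IP x h) => [h'|h'].
    * rewrite EW in h'; case/In_cat: h' => [h'|[<-|h']].
      -- left; apply: w; apply/In_cat; by left.
      -- right => e He; apply: P'; exact/Hes.
      -- left; apply: w; apply/In_cat; by right.
    * right => e He; exact: proc_mono (h' e He) q t.
- exists k; split => //. rewrite kw /c0 /= EW !size_cat /= addnS. done.
Qed.

Hypothesis Ha0 : forall v x, a0 v = Some x -> List.In x C.
Hypothesis Hsafe : safe D M0 a0.

Lemma init_abs : abs_val C a0 s0.2.
Proof.
split => v /=; rewrite ffunE; case E: (a0 v) => [x|] //=.
move=> r [<-] /=; exact: Ha0 E.
Qed.

Lemma valid_s0 : validS s0.
Proof.
split; first by exists M0, a0; split; [exact: reach_init|split; [done|exact: init_abs]].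
exact: (proj2 init_abs).
Qed.

Lemma Inv_init : Inv (alg_init Name s0).
Proof.
split; first by left. split; [split; [|split]|split].
- by move=> x [<-|[]]; exact: valid_s0.
- constructor; [by []|constructor].
- by move=> ? ? ? [].
- done.
- by move=> x h; left.
Qed.

Lemma Inv_reach c : alg_reach D C (alg_init Name s0) c -> Inv c.
Proof. elim=> [|c1 c2 _ IH Hs]; [exact: Inv_init|exact: (proj1 (step_inv IH Hs))]. Qed.

Definition LR : seq region :=
  RAll :: flat_map (fun c => RBelow c :: RPoint c :: RAbove c :: List.map (fun d => RBetween c d) C) C.

Lemma LR_complete r : is_region C r -> In r LR.
Proof.
rewrite /LR; case: r => [c|c|a b|c|] /=.
- case=> h _; right; apply/in_flat_map; exists c; split => //; by left.
- move=> h; right; apply/in_flat_map; exists c; split => //; by right; left.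
- case=> ha [hb _]; right; apply/in_flat_map; exists a; split => //.
  do 3 right; exact: in_map.
- case=> h _; right; apply/in_flat_map; exists c; split => //; by right; right; left.
- by left.
Qed.

Definition nLR := length LR.
Definition decR (g : {ffun Att -> option 'I_nLR}) : rval Att :=
  [ffun v => omap (fun i : 'I_nLR => List.nth (nat_of_ord i) LR RAll) (g v)].

Lemma size_len (A : Type) (l : seq A) : size l = length l.
Proof. by elim: l => //= x l ->. Qed.

Lemma In_mem (X : eqType) (x : X) (s : seq X) : x \in s -> In x s.
Proof. elim: s => //= y s IH; rewrite in_cons => /orP [/eqP ->|/IH]; [left|right]. done. done. Qed.

Lemma decR_surj (rb : rval Att) : (forall v r, rb v = Some r -> is_region C r) ->
  exists g, decR g = rb.
Proof.
move=> H.
have : forall v, exists o : option 'I_nLR,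
    omap (fun i : 'I_nLR => List.nth (nat_of_ord i) LR RAll) o = rb v.
  move=> v; case E: (rb v) => [r|]; last by exists None.
  have [k [hk ek]] := In_nth LR r RAll (LR_complete (H v r E)).
  have hk' : k < nLR by apply/ltP.
  exists (Some (Ordinal hk')); rewrite -ek; done.
case/fin_all_exists => f Hf; exists [ffun v => f v].
by apply/ffunP => v; rewrite !ffunE.
Qed.

Local Notation XT := ({ffun P -> 'I_2} * {ffun Att -> option 'I_nLR})%type.
Definition decS (x : XT) : astate Att P := ([ffun p => nat_of_ord (x.1 p)], decR x.2).
Definition NB := size (enum {: XT}).

Lemma decS_surj s : validS s -> exists x, decS x = s.
Proof.
case: s => M rb [[M' [a [Hr [/= EM _]]]] /= Hrb].
have [g Hg] := decR_surj Hrb.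
have HM : forall p, M p <= 1 by subst M'; exact: Hsafe Hr.
exists ([ffun p => inord (M p)], g); rewrite /decS /= Hg; congr pair.
by apply/ffunP => p; rewrite !ffunE inordK // ltnS HM.
Qed.

Lemma bound (l : seq (astate Att P)) : NoDup l -> (forall x, In x l -> validS x) -> size l <= NB.
Proof.
move=> ND HV.
have : incl l (List.map decS (enum {: XT})).
  move=> x /HV /decS_surj [y <-]; apply: in_map; apply: In_mem; by rewrite mem_enum.
move=> /(NoDup_incl_length ND); rewrite length_map -!size_len => /leP. done.
Qed.

Definition mu (c : config Name Att P) := NB.+1 * (NB - size (cQ c)) + size (cW c).

Lemma acc_mu n : forall c, Inv c -> mu c < n -> Acc (fun c' c => alg_step D C c c') c.
Proof.
elim: n => [|n IH] c Ic; first by [].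
move=> Hmu; constructor => c' Hs.
have [Ic' [k [kq kw]]] := step_inv Ic Hs.
apply: IH => //.
have Hb := bound (proj1 (proj2 (proj1 (proj2 Ic')))) (proj1 (proj1 (proj2 Ic'))).
rewrite /mu kq in Hb *. move: Hmu; rewrite /mu.
have E : NB - size (cQ c) = (NB - (size (cQ c) + k)) + k by lia.
rewrite E mulnDr.
have : k <= NB.+1 * k by rewrite mulSn leq_addr.
lia.
Qed.


Lemma pa_ex s es : forall c : config Name Att P, exists c', process_all D s es c c'.
Proof.
elim: es => [|e es IH] c; first by exists c; constructor.
set s' := afire D s e.1 e.2.
have [psi Hpsi] : exists psi, alg_label D e.1 s' psi.
  case: (classic (wg D e.1 = GTrue Att)) => h.
  - exists (@CName Name Att (lab D e.1)); by left.
  - exists (CAnd (@CName Name Att (lab D e.1)) (guard_of D e.1 s'.2)); by right.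
have [c1 H1] : exists c1, process_one D s e c c1.
  case: (classic (In s' (cQ c))) => h.
  - exists (Config (cQ c) (cW c) ((s, psi, s') :: cTr c)); exists psi; split => //; split => //; by left.
  - exists (Config (s' :: cQ c) (s' :: cW c) ((s, psi, s') :: cTr c)); exists psi; split => //; split => //; by right.
have [c2 H2] := IH c1; exists c2; exact: pa_cons H1 H2.
Qed.

Definition cand : seq (T * rval Att) :=
  list_prod (enum T) (List.map decR (enum {: {ffun Att -> option 'I_nLR}})).

Lemma step_ex c : cW c <> [::] -> exists c', alg_step D C c c'.
Proof.
case E: (cW c) => [|s W2] // _.
pose pb := fun e => if excluded_middle_informative (enabled_abs D C s e) then true else false.
pose deq := fun x y : T * rval Att => excluded_middle_informative (x = y).
pose es := nodup deq (List.filter pb cand).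
have [c' Hc'] := pa_ex s es (Config (cQ c) ([::] ++ W2) (cTr c)).
exists c', s, [::], W2, es; split; first by rewrite E.
split; first exact: NoDup_nodup.
split => // e; rewrite nodup_In filter_In /pb.
case: (excluded_middle_informative (enabled_abs D C s e)) => h; last by split => // -[].
split => // _; split => //.
case: e h => t rb /= [_ [Hg _]]; apply: in_prod; first by apply: In_mem; rewrite mem_enum.
have [g <-] := decR_surj (rb:=rb) Hg; apply: in_map; apply: In_mem; by rewrite mem_enum.
Qed.

Lemma label_equiv t (s' : astate Att P) psi : alg_label D t s' psi ->
  cond_equiv psi (CAnd (@CName Name Att (lab D t)) (guard_of D t s'.2)).
Proof.
case=> [[Hw ->]|[_ ->]]; last by move=> n nu.
rewrite /guard_of /wvars Hw /= enum_set0 /= => n nu /=; tauto.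
Qed.

Lemma cond_equiv_sym (f1 f2 : cond Name Att) : cond_equiv f1 f2 -> cond_equiv f2 f1.
Proof. move=> h n nu; have := h n nu; tauto. Qed.

Lemma astate_eq (s s' : astate Att P) : s.1 = s'.1 -> s.2 = s'.2 -> s = s'.
Proof. by case: s; case: s' => ? ? ? ? /= -> ->. Qed.

Lemma output (Mf : {ffun P -> nat}) c : Inv c -> cW c = [::] -> output_is_induced D C M0 Mf a0 c.
Proof.
move=> [I0 [[LV [LN LT]] [IW IP]]] EW.
have Proc : forall x, In x (cQ c) -> forall e, enabled_abs D C x e -> proc c x e.
  by move=> x /IP; rewrite EW => -[[]|].
have Compl : forall (M : marking P) (a : pval Att), reach D M0 a0 M a -> forall s : astate Att P, s.1 = M -> abs_val C a s.2 -> In s (cQ c).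
  move=> M a; elim=> {M a} [|M a t b Hr IH En] s E1 E2.
  - have -> : s = s0 by apply: astate_eq => //; exact: abs_uniq E2 init_abs.
    done.
  - have [ra Hra] := abs_ex a.
    have Is1 : In (M, ra) (cQ c) by exact: IH.
    have [rb [Hen Hab]] := @complete_step (M, ra) a t b Hra En.
    have [Hin _] := Proc _ Is1 _ Hen.
    have -> : s = afire D (M, ra) (t, rb).1 (t, rb).2 => //.
    apply: astate_eq; first by rewrite E1.
    exact: abs_uniq E2 Hab.
have QE : forall s, In s (cQ c) <-> ind_Q D C M0 a0 s.
  move=> s; split; first by move/LV => [].
  by move=> [M [a [Hr [E1 E2]]]]; exact: Compl Hr s E1 E2.
split; first exact: QE.
split; first by split => //; exact: init_abs.
split; first by move=> s; rewrite QE.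
split.
- move=> s psi s' /LT [Is [Is' [[t rb] [Hen [Es' Hl]]]]].
  exists (CAnd (@CName Name Att (lab D t)) (guard_of D t s'.2)); split; last exact: label_equiv Hl.
  have [Vs Gs] := LV _ Is; have [Vs' Gs'] := LV _ Is'.
  split => //; split => //.
  case: Hen => [_ [Grb [a [b [ia [ib En]]]]]].
  exists t, a, b; split; first by split.
  split => //; split; first by rewrite Es'.
  split => //; split => // v; rewrite Es' /fire_v /= !ffunE.
  case: (v \in wvars D t); [exact: ib|exact: ia].
- move=> s psi s' [Qs [Qs' [t [a [b [Ha [En [E1 [E2 ->]]]]]]]]].
  have Is : In s (cQ c) by apply/QE.
  have [rb [Hen Hab]] := complete_step Ha En.
  have [Hin [psi' [Hl HT]]] := Proc _ Is _ Hen.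
  have Es' : afire D s (t, rb).1 (t, rb).2 = s'.
    apply: astate_eq; first by rewrite E1.
    exact: abs_uniq Hab E2.
  rewrite Es' in Hl HT.
  exists psi'; split => //; apply: cond_equiv_sym; exact: label_equiv Hl.
Qed.

Lemma main_sec (Mf : {ffun P -> nat}) : alg_terminates D C (alg_init Name (init_astate M0 a0)) /\
  (forall c, alg_reach D C (alg_init Name (init_astate M0 a0)) c -> cW c = [::] ->
     output_is_induced D C M0 Mf a0 c).
Proof.
split; [split|].
- exact: (@acc_mu (mu (alg_init Name s0)).+1 _ Inv_init).
- move=> c _ h; exact: step_ex h.
- move=> c Hr h; exact: output (Inv_reach Hr) h.
Qed.

End Main.

Theorem theorem1 (Name : Type) (Att P T : finType)
    (E : seq (Name * {set Att})) (D : DPN Name Att P T)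
    (M0 Mf : {ffun P -> nat}) (a0 : {ffun Att -> option R}) (C : seq R) :
  List.NoDup (map fst E) ->
  DPN_over E D ->
  (forall v, v \in V D <-> a0 v <> None) ->
  safe D M0 a0 ->
  well_formed E D ->
  (forall t c, List.In c (gconsts (rg D t)) \/ List.In c (gconsts (wg D t)) -> List.In c C) ->
  (forall v x, a0 v = Some x -> List.In x C) ->
  alg_terminates D C (alg_init Name (init_astate M0 a0)) /\
  (forall c, alg_reach D C (alg_init Name (init_astate M0 a0)) c -> cW c = [::] ->
     output_is_induced D C M0 Mf a0 c).
Proof.
move=> _ _ _ Hs _ Hg Ha.
exact: (main_sec Hg Ha Hs Mf).
Qed.
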